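(* If $G$ is a (finite, loopless) multigraph and $f$ is a demand function for the line graph $L(G)$ such that each edge $e\in E(G)$ with endpoints $u,v$ satisfies $f(e) \leq 2 / (3\max\{d(u), d(v)\})$, then $L(G)$ has an $f$-coloring.
   Context: For a multigraph $G$, $\mu(uv)$ denotes the number of edges between $u$ and $v$ and $d(v)=\sum_{u\in N(v)}\mu(uv)$ is the number of edges incident to $v$. The line graph $L(G)$ has vertex set $E(G)$, two edges being adjacent when they share an endpoint. A demand function for a graph $H$ is a function $f: V(H)\to [0,1]\cap\mathbb{Q}$. A fractional coloring of $H$ assigns to each vertex a measurable subset of $[0,1]$ so that adjacent vertices receive disjoint sets; an $f$-coloring is a fractional coloring $\phi$ with Lebesgue measure of $\phi(x)$ at least $f(x)$ for every vertex $x$. *)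

(* Defs.v *)
From HB Require Import structures.
From mathcomp Require Import all_boot all_order all_algebra.
From mathcomp Require Import all_classical all_reals all_analysis.
Set Implicit Arguments. Unset Strict Implicit. Unset Printing Implicit Defensive.
Import Order.TTheory GRing.Theory Num.Theory.

(* A finite loopless multigraph: vertex type V, edge type E (edges are
   distinct objects, so parallel edges are allowed), endpoints src e, tgt e. *)
Definition loopless (V E : finType) (src tgt : E -> V) : Prop :=
  forall e, src e != tgt e.

Definition incident (V E : finType) (src tgt : E -> V) (v : V) (e : E) : bool :=
  (src e == v) || (tgt e == v).

Definition deg (V E : finType) (src tgt : E -> V) (v : V) : nat :=
  #|[set e : E | incident src tgt v e]|.

Definition line_adj (V E : finType) (src tgt : E -> V) (e e' : E) : bool :=
  (e != e') && [exists v : V, incident src tgt v e && incident src tgt v e'].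

Definition demand (E : finType) (f : E -> rat) : Prop :=
  forall e, (0 <= f e <= 1)%R.

Local Open Scope classical_set_scope.
Local Open Scope ring_scope.

Definition f_coloring (R : realType) (V E : finType) (src tgt : E -> V)
    (f : E -> rat) (phi : E -> set R) : Prop :=
  [/\ forall e, measurable (phi e),
      forall e, phi e `<=` `[0%R, 1%R]%classic,
      forall e e', line_adj src tgt e e' -> phi e `&` phi e' = set0
    & forall e, ((ratr (f e))%:E <= (@lebesgue_measure R) (phi e))%E].

(* Main.v *)
Require Import Defs.
From HB Require Import structures.
From mathcomp Require Import all_boot all_order all_algebra.
From mathcomp Require Import all_classical all_reals all_analysis.
From mathcomp Require Import ring zify.
From Stdlib Require Import Classical_Prop.
Import Order.TTheory GRing.Theory Num.Theory.
Set Implicit Arguments. Unset Strict Implicit. Unset Printing Implicit Defensive.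
Module KempeM.

Lemma nb1 (T : finType) (r : rel T) w a u :
  #|[set t | r w t]| <= 1 -> r w a -> r w u -> u = a.
Proof.
move=> h ra ru; apply/eqP/negPn/negP => ne.
have : #|[set a; u]| <= #|[set t | r w t]|.
  by apply/subset_leq_card/fintype.subsetP => t; rewrite !inE => /orP[] /eqP ->.
by rewrite cards2 eq_sym ne => /leq_trans /(_ h).
Qed.

Lemma nb2 (T : finType) (r : rel T) w a b u :
  #|[set t | r w t]| <= 2 -> a != b -> r w a -> r w b -> r w u -> (u == a) || (u == b).
Proof.
move=> h ab ra rb ru; apply/negPn/negP; rewrite negb_or => /andP[ua ub].
have : #|u |: [set a; b]| <= #|[set t | r w t]|.
  by apply/subset_leq_card/fintype.subsetP => t; rewrite !inE => /or3P[] /eqP ->.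
by rewrite cardsU1 cards2 ab !inE negb_or ua ub => /leq_trans /(_ h).
Qed.

Lemma mid (T : eqType) (r : rel T) (y w : T) p : w \in p -> path r y p -> uniq (y :: p) ->
  exists2 a, a \in y :: p & r a w /\ (w != last y p -> exists2 b, b \in p & r w b /\ a != b).
Proof.
case/splitPr => p1 p2 pth uq.
move: pth; rewrite cat_path /= => /and3P [_ ra pw2].
exists (last y p1).
  by move: (mem_last y p1); rewrite !in_cons mem_cat => /orP[->|->]; rewrite ?orbT.
split => //; rewrite last_cat /=.
case: p2 pw2 uq => [|b p2] pw2 uq; first by rewrite /= eqxx.
move: pw2 => /= /andP[rb _] _; exists b; first by rewrite mem_cat !inE eqxx !orbT.
split => //; apply/eqP => eb.
move: uq; rewrite -cat_cons cat_uniq => /and3P[_ /hasPn /(_ b) + _].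
rewrite -eb mem_last => h; have hb : last y p1 \in [:: w, last y p1 & p2] by rewrite !inE eqxx orbT.
by move: (h hb).
Qed.

Lemma three_ends (T : finType) (r : rel T) (x y z : T) :
  symmetric r ->
  (forall w, #|[set u | r w u]| <= 2) ->
  #|[set u | r x u]| <= 1 -> #|[set u | r y u]| <= 1 -> #|[set u | r z u]| <= 1 ->
  x != y -> z != y -> z != x ->
  connect r y x -> connect r y z -> False.
Proof.
move=> sym N2 Nx Ny Nz xy zy zx /connectP [p0 pth0 lst0] /connectP [q pq lq].
move: lst0; case/shortenP: pth0 => p pth uq _ lst.
have pne : p != [::] by case: p {pth uq} lst => //= xe; rewrite xe eqxx in xy.
have cl : forall w u, w \in y :: p -> r w u -> u \in y :: p.
  move=> w u; rewrite inE => /orP [/eqP -> | wp] ru.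
    case: p pne pth uq lst => // n p' _ /= /andP [rn _] _ _.
    by rewrite (nb1 Ny rn ru) !inE eqxx orbT.
  have [a ain [ra hb]] := mid wp pth uq.
  have [wl | wnl] := eqVneq w (last y p).
    by move: ra ru; rewrite wl -lst => ra ru; rewrite sym in ra; rewrite (nb1 Nx ra ru).
  have [b bin [rb ab]] := hb wnl.
  rewrite sym in ra.
  case/orP: (nb2 (N2 w) ab ra rb ru) => /eqP ->; first by [].
  by rewrite inE bin orbT.
have key : forall q a, a \in y :: p -> path r a q -> last a q \in y :: p.
  by elim => [|c q' IH] a //= ain /andP [rc pc]; exact: IH (cl _ _ ain rc) pc.
have zin : z \in y :: p by rewrite lq; exact: key q y (mem_head y p) pq.
move: zin; rewrite inE (negbTE zy) /= => zp.
have [a _ [ra hb]] := mid zp pth uq.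
have zl : z != last y p by rewrite -lst.
have [b _ [rb ab]] := hb zl.
rewrite sym in ra.
by move: ab; rewrite (nb1 Nz ra rb) eqxx.
Qed.

Set Implicit Arguments. Unset Strict Implicit. Unset Printing Implicit Defensive.

Section Kempe.
Variables (V E : finType) (src tgt : E -> V) (K : nat).
Local Notation inc := (incident src tgt).

Definition share (e e' : E) := [exists v, inc v e && inc v e'].
Definition proper (A : {set E}) (col : E -> 'I_K) :=
  forall e e', e \in A -> e' \in A -> e != e' -> share e e' -> col e != col e'.
Definition present (A : {set E}) (col : E -> 'I_K) v c :=
  [exists e in A, inc v e && (col e == c)].

Lemma presentP (A : {set E}) (col : E -> 'I_K) (v : V) (c : 'I_K) :
  reflect (exists2 e, e \in A & inc v e /\ col e = c) (present A col v c).
Proof.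
apply: (iffP existsP) => [[e /and3P [ea ie /eqP ce]] | [e ea [ie ce]]].
  by exists e.
by exists e; rewrite ea ie ce eqxx.
Qed.

Lemma share_inc e e' v : inc v e -> inc v e' -> share e e'.
Proof. by move=> h h'; apply/existsP; exists v; rewrite h h'. Qed.

Section Swap.
Variables (A : {set E}) (col : E -> 'I_K) (b g : 'I_K).

Definition S := [set e in A | (col e == b) || (col e == g)].
Definition sadj : rel V := fun u w =>
  [exists e in S, ((src e == u) && (tgt e == w)) || ((src e == w) && (tgt e == u))].
Definition comp y := [set w | connect sadj y w].
Definition Pset y := [set e in S | src e \in comp y].
Definition swapc c := if c == b then g else if c == g then b else c.
Definition kswap y e := if e \in Pset y then swapc (col e) else col e.

Lemma sadj_sym : symmetric sadj.
Proof.
move=> u w; apply/existsP/existsP => [[e he]|[e he]]; exists e;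
  by move: he; rewrite orbC.
Qed.

Lemma sadj_edge e : e \in S -> sadj (src e) (tgt e).
Proof. by move=> eS; apply/existsP; exists e; rewrite eS !eqxx. Qed.

Lemma in_P e w y : e \in S -> inc w e -> w \in comp y -> e \in Pset y.
Proof.
move=> eS /orP [/eqP <- | /eqP <-] wc; rewrite inE eS //=.
move: wc; rewrite !inE => wc.
apply: connect_trans wc (connect1 _).
by rewrite sadj_sym; apply: sadj_edge.
Qed.

Lemma P_comp e w y : e \in Pset y -> inc w e -> w \in comp y.
Proof.
rewrite inE => /andP [eS sc] /orP [/eqP <- | /eqP <-] //.
move: sc; rewrite !inE => sc.
exact: connect_trans sc (connect1 (sadj_edge eS)).
Qed.

Lemma swapcK : involutive swapc.
Proof.
move=> c; rewrite /swapc.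
case: (eqVneq c b) => [->|cb].
  by rewrite eqxx; case: (eqVneq g b) => [->|gb] //; rewrite eqxx.
case: (eqVneq c g) => [->|cg]; first by rewrite eqxx.
by rewrite (negbTE cb) (negbTE cg).
Qed.

Lemma swapc_bg c : (c == b) || (c == g) -> (swapc c == b) || (swapc c == g).
Proof.
rewrite /swapc; case: (eqVneq c b) => [_|cb] /=; first by rewrite eqxx orbT.
by move=> cg; rewrite cg eqxx.
Qed.

Lemma swapc_out c : ~~ ((c == b) || (c == g)) -> swapc c = c.
Proof. by rewrite negb_or /swapc => /andP [/negbTE -> /negbTE ->]. Qed.

Lemma kswap_out y e : e \notin S -> kswap y e = col e.
Proof. by move=> eS; rewrite /kswap inE (negbTE eS). Qed.

Lemma kswap_proper y : proper A col -> proper A (kswap y).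
Proof.
move=> pr e e' ea ea' ne sh.
have gen : forall f f', f \in A -> f' \in A -> share f f' -> f \in Pset y -> f' \notin Pset y ->
    kswap y f != kswap y f'.
  move=> f f' fa fa' /existsP [w /andP [wf wf']] fP f'P.
  rewrite /kswap fP (negbTE f'P); apply/eqP => cf.
  have fS : f \in S by move: fP; rewrite inE => /andP [].
  have f'S : f' \in S.
    rewrite inE fa' /= -cf; apply: swapc_bg.
    by move: fS; rewrite inE => /andP [].
  by move: f'P; rewrite (in_P f'S wf' (P_comp fP wf)).
have sh' : share e' e by move: sh => /existsP [w /andP [h1 h2]]; exact: share_inc h2 h1.
case: (boolP (e \in Pset y)) => eP; case: (boolP (e' \in Pset y)) => e'P.
- rewrite /kswap eP e'P; apply: contra (pr e e' ea ea' ne sh) => /eqP h.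
  by rewrite -(swapcK (col e)) h swapcK.
- exact: gen.
- by rewrite eq_sym; apply: gen.
- by rewrite /kswap (negbTE eP) (negbTE e'P); apply: pr.
Qed.

Lemma kswap_pres_out y w c : w \notin comp y ->
  present A (kswap y) w c = present A col w c.
Proof.
move=> wc.
have h : forall e, inc w e -> kswap y e = col e.
  move=> e we; rewrite /kswap; case: ifP => // eP.
  by move: wc; rewrite (P_comp eP we).
apply/presentP/presentP => [[e ea [we ce]]|[e ea [we ce]]]; exists e => //;
  by rewrite ?h // -?(h e we).
Qed.

Lemma kswap_pres_in y w c : w \in comp y ->
  present A (kswap y) w c = present A col w (swapc c).
Proof.
move=> wc.
have key : forall e, e \in A -> inc w e -> (kswap y e == c) = (col e == swapc c).
  move=> e ea we; case: (boolP (e \in S)) => eS.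
    rewrite /kswap (in_P eS we wc).
    apply/eqP/eqP => [<-|->]; by rewrite swapcK.
  rewrite kswap_out //.
  have : ~~ ((col e == b) || (col e == g)) by move: eS; rewrite /S inE ea.
  move=> h; case: (boolP ((c == b) || (c == g))) => cbg.
    have sbg := swapc_bg cbg.
    have nf : forall d, (d == b) || (d == g) -> (col e == d) = false.
      by move=> d dbg; apply/negbTE; apply: contra h => /eqP ->.
    by rewrite !nf.
  by rewrite swapc_out.
apply/existsP/existsP => [[e /and3P [ea we ce]]|[e /and3P [ea we ce]]]; exists e;
  by rewrite ea we /= ?(key e ea we) // -(key e ea we).
Qed.


Lemma nb_sadj w (C : {set 'I_K}) : proper A col ->
  (forall c, present A col w c -> (c == b) || (c == g) -> c \in C) ->
  #|[set u | sadj w u]| <= #|C|.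
Proof.
move=> pr hC.
pose Ew := [set e in S | inc w e].
pose oth e := if src e == w then tgt e else src e.
apply: (@leq_trans #|oth @: Ew|).
  apply/subset_leq_card/fintype.subsetP => u; rewrite inE => /existsP [e /andP [eS he]].
  apply/imsetP; exists e.
    rewrite /Ew inE eS /=; rewrite /incident.
    by case/orP: he => /andP [/eqP -> /eqP ->]; rewrite eqxx ?orbT.
  rewrite /oth; case/orP: he => /andP [/eqP -> /eqP ->]; first by rewrite eqxx.
  by case: eqVneq => [->|].
apply: (leq_trans (leq_imset_card _ _)).
have inj : {in Ew &, injective col}.
  move=> e e'; rewrite /Ew !finset.in_set => /andP [eS we] /andP [e'S we'] ce.
  apply/eqP/negPn/negP => ne.
  have ea : e \in A by case/andP: eS.
  have ea' : e' \in A by case/andP: e'S.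
  by move: (pr e e' ea ea' ne (share_inc we we')); rewrite ce eqxx.
rewrite -(card_in_imset inj); apply/subset_leq_card/fintype.subsetP => c /imsetP [e].
rewrite /Ew finset.in_set => /andP [eS we] ->.
have /andP [ea ebg] : (e \in A) && ((col e == b) || (col e == g)) by move: eS; rewrite /S finset.in_set.
apply: hC ebg; apply/presentP; exists e => //.
Qed.

End Swap.
End Kempe.

Section Ext.
Variables (V E : finType) (src tgt : E -> V) (K : nat).
Local Notation inc := (incident src tgt).
Variables (U : {set E}) (D : nat).
Hypothesis loopU : forall e, e \in U -> src e != tgt e.
Hypothesis degU : forall v, #|[set e in U | inc v e]| <= D.
Hypothesis DK : 3 * D <= 2 * K.

Definition miss (A : {set E}) (col : E -> 'I_K) v := [set c : 'I_K | ~~ present src tgt A col v c].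

Lemma miss_card (A : {set E}) (col : E -> 'I_K) v : K <= #|miss A col v| + #|[set e in A | inc v e]|.
Proof.
have -> : miss A col v = ~: [set c | present src tgt A col v c].
  by apply/setP => c; rewrite !inE.
have h1 := cardsC [set c | present src tgt A col v c]; rewrite card_ord in h1.
have h2 : #|[set c | present src tgt A col v c]| <= #|[set e in A | inc v e]|.
  apply: (@leq_trans #|col @: [set e in A | inc v e]|); last exact: leq_imset_card.
  apply/subset_leq_card/fintype.subsetP => c; rewrite inE => /presentP [e ea [ve <-]].
  by apply/imsetP; exists e => //; rewrite inE ea ve.
lia.
Qed.

Lemma ex_miss (A : {set E}) (col : E -> 'I_K) v : #|[set e in A | inc v e]| < K -> exists c, ~~ present src tgt A col v c.
Proof.
move=> h; have hm := miss_card A col v.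
have : 0 < #|miss A col v| by move: h; lia.
by case/card_gt0P => c; rewrite inE => hc; exists c.
Qed.

Definition oth (y : V) (e : E) := if src e == y then tgt e else src e.

Lemma oth_inc y e : inc (oth y e) e.
Proof. by rewrite /oth /incident; case: ifP => _; rewrite eqxx ?orbT. Qed.

Lemma inc_oth y e v : inc y e -> inc v e -> (v == y) || (v == oth y e).
Proof.
move=> hy hv; rewrite /oth; case: (eqVneq (src e) y) => [sy|sy].
  by move: hv; rewrite /incident sy => /orP [/eqP ->|/eqP ->]; rewrite eqxx ?orbT.
have ty : tgt e = y by move: hy; rewrite /incident (negbTE sy) => /eqP.
by move: hv; rewrite /incident ty => /orP [/eqP ->|/eqP ->]; rewrite eqxx ?orbT.
Qed.

Variables (A : {set E}) (e0 : E).
Hypotheses (AU : A \subset U) (e0U : e0 \in U) (e0A : e0 \notin A).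
Hypothesis noext : ~ exists col : E -> 'I_K, proper src tgt (e0 |: A) col.

Lemma la (col : E -> 'I_K) : proper src tgt A col -> forall c,
  present src tgt A col (src e0) c || present src tgt A col (tgt e0) c.
Proof.
move=> pr c; apply/negPn/negP; rewrite negb_or => /andP [hx hy].
apply: noext; exists (fun e => if e == e0 then c else col e).
have key : forall e', e' \in A -> share src tgt e0 e' -> col e' != c.
  move=> e' ea /existsP [v /andP [/orP [/eqP hv|/eqP hv] ie']]; apply/eqP => ce.
    by move/negP: hx; apply; apply/presentP; exists e'; rewrite ?hv.
  by move/negP: hy; apply; apply/presentP; exists e'; rewrite ?hv.
have shs : forall e e', share src tgt e e' -> share src tgt e' e.
  by move=> e e' /existsP [v /andP [h1 h2]]; exact: share_inc h2 h1.
move=> e e'; rewrite !in_setU1 => he he' ne sh.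
case: (eqVneq e e0) => [Ee|ne0]; case: (eqVneq e' e0) => [Ee'|ne0'].
- by move: ne; rewrite Ee Ee' eqxx.
- have e'a : e' \in A by move: he'; rewrite (negbTE ne0').
  by rewrite eq_sym; apply: key => //; rewrite -Ee.
- have ea : e \in A by move: he; rewrite (negbTE ne0).
  by apply: key => //; rewrite -Ee'; apply: shs.
- have ea : e \in A by move: he; rewrite (negbTE ne0).
  have e'a : e' \in A by move: he'; rewrite (negbTE ne0').
  exact: pr.
Qed.

Lemma lb (col : E -> 'I_K) e1 : proper src tgt A col -> e1 \in A -> inc (tgt e0) e1 ->
  ~~ present src tgt A col (src e0) (col e1) ->
  forall c, present src tgt A col (tgt e0) c || present src tgt A col (oth (tgt e0) e1) c.
Proof.
set y := tgt e0; move=> pr e1A ye1 hx c.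
apply/negPn/negP; rewrite negb_or => /andP [hy hz].
have ca : c != col e1.
  by apply: contra hy => /eqP ->; apply/presentP; exists e1.
pose col1 e := if e == e1 then c else col e.
have pr1 : proper src tgt A col1.
  have key : forall e', e' \in A -> share src tgt e1 e' -> col e' != c.
    move=> e' ea /existsP [v /andP [ve1 ve']]; apply/eqP => ce.
    case/orP: (inc_oth ye1 ve1) => /eqP hv.
      by move/negP: hy; apply; apply/presentP; exists e'; rewrite -?hv.
    by move/negP: hz; apply; apply/presentP; exists e'; rewrite -?hv.
  move=> e e' ea ea' ne sh; rewrite /col1.
  case: (eqVneq e e1) => [Ee|ne1]; case: (eqVneq e' e1) => [Ee'|ne1'].
  - by move: ne; rewrite Ee Ee' eqxx.
  - by rewrite eq_sym; apply: key => //; rewrite -Ee.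
  - apply: key => //; rewrite -Ee'.
    by move: sh => /existsP [v /andP [h1 h2]]; exact: share_inc h2 h1.
  - exact: pr.
have := la pr1 (col e1).
apply/negP; rewrite negb_or; apply/andP; split.
  apply/presentP => [[e ea [xe]]]; rewrite /col1; case: eqP => [_ /eqP|ne1 ce].
    by rewrite (negbTE ca).
  by move/negP: hx; apply; apply/presentP; exists e.
apply/presentP => [[e ea [ye]]]; rewrite /col1; case: eqP => [_ /eqP|/eqP ne1 ce].
  by rewrite (negbTE ca).
by move: (pr e e1 ea e1A ne1 (share_inc ye ye1)); rewrite ce eqxx.
Qed.


Lemma edges_lt v : inc v e0 -> #|[set e in A | inc v e]| < D.
Proof.
move=> ve0; apply: (leq_trans _ (degU v)); apply: proper_card.
rewrite properE; apply/andP; split.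
  by apply/fintype.subsetP => e; rewrite !inE => /andP [ea ->]; rewrite (fintype.subsetP AU).
apply/negP => /fintype.subsetP /(_ e0); rewrite !inE e0U ve0 (negbTE e0A) => /(_ isT).
by [].
Qed.

Lemma edges_le v : #|[set e in A | inc v e]| <= D.
Proof.
apply: leq_trans (degU v); apply/subset_leq_card/fintype.subsetP => e.
by rewrite !inE => /andP [ea ->]; rewrite (fintype.subsetP AU).
Qed.

Lemma main_contra (col : E -> 'I_K) : proper src tgt A col -> False.
Proof.
move=> pr.
set x := src e0; set y := tgt e0.
have xe0 : inc x e0 by rewrite /incident eqxx.
have ye0 : inc y e0 by rewrite /incident eqxx orbT.
have DleK : D <= K by lia.
have [al hal] : exists c, ~~ present src tgt A col x c.
  by apply: ex_miss; apply: leq_trans (edges_lt xe0) DleK.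
have := la pr al; rewrite (negbTE hal) /= => /presentP [e1 e1A [ye1 ce1]].
set z := oth y e1.
have ze1 : inc z e1 by apply: oth_inc.
have zy : z != y.
  have l1 := loopU (fintype.subsetP AU _ e1A).
  rewrite /z /oth; case: (eqVneq (src e1) y) => [sy|sy] //.
  by rewrite eq_sym -sy.
have zx : z != x.
  apply/eqP => zx; move/negP: hal; apply; apply/presentP; exists e1 => //.
  by rewrite -zx.
have hx1 : ~~ present src tgt A col x (col e1) by rewrite ce1.
have Hyz := lb pr e1A ye1 hx1.
have xy : x != y by apply: loopU.
have Hxz : forall c, present src tgt A col x c || present src tgt A col z c.
  move=> ga; apply/negPn/negP; rewrite negb_or => /andP [gx gz].
  have [be hbe] : exists c, ~~ present src tgt A col y c.
    by apply: ex_miss; exact: leq_trans (edges_lt ye0) DleK.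
  have gy : present src tgt A col y ga by have := la pr ga; rewrite (negbTE gx).
  have gb : ga != be by apply: contraNneq hbe => <-.
  have ab : al != be by apply: contraNneq hbe => <-; apply/presentP; exists e1.
  have ag : al != ga by apply: contraNneq gz => <-; apply/presentP; exists e1.
  pose r := sadj src tgt A col be ga.
  have rsym : symmetric r by apply: sadj_sym.
  have N2 w : #|[set u | r w u]| <= 2.
    apply: leq_trans (nb_sadj (b := be) (g := ga) (w := w) (C := [set be; ga]) pr _) _.
      by move=> c _ /orP [/eqP ->|/eqP ->]; rewrite !inE eqxx ?orbT.
    by rewrite cards2; case: (_ != _).
  have N1 w b1 g1 : [set b1; g1] = [set be; ga] -> ~~ present src tgt A col w g1 ->
      #|[set u | r w u]| <= 1.
    move=> e12 hg; rewrite -(cards1 b1).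
    apply: nb_sadj pr _ => c pc cbg.
    have : c \in [set b1; g1] by rewrite e12 !inE.
    rewrite !inE => /orP [//|/eqP cg].
    by move: hg; rewrite -cg pc.
  have e21 : [set ga; be] = [set be; ga] by apply/setP => c; rewrite !inE orbC.
  have Nx := N1 x be ga (erefl _) gx.
  have Ny := N1 y ga be e21 hbe.
  have Nz := N1 z be ga (erefl _) gz.
  have nc : connect r y x -> connect r y z -> False.
    exact: three_ends rsym N2 Nx Ny Nz xy zy zx.
  have csym : connect_sym r by apply: sym_connect_sym.
  case: (boolP (connect r y x)) => cyx.
    have cyz : ~~ connect r y z by apply/negP => h; exact: nc cyx h.
    have yz : y \notin comp src tgt A col be ga z.
      by rewrite inE; apply: contra cyz; rewrite csym.
    have xz : x \notin comp src tgt A col be ga z.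
      rewrite inE; apply/negP => czx; move/negP: cyz; apply.
      by apply: connect_trans cyx _; rewrite csym.
    have zz : z \in comp src tgt A col be ga z by rewrite inE connect0.
    have pr' := kswap_proper be ga z pr.
    have e1S : e1 \notin S A col be ga by rewrite inE e1A ce1 /= negb_or ab ag.
    have ce1' := kswap_out src tgt z e1S.
    have hx' : ~~ present src tgt A (kswap src tgt A col be ga z) x
                 (kswap src tgt A col be ga z e1).
      by rewrite ce1' (kswap_pres_out _ xz) ce1.
    have := lb pr' e1A ye1 hx' be.
    rewrite (kswap_pres_out _ yz) (kswap_pres_in _ zz) /swapc eqxx.
    by rewrite (negbTE hbe) (negbTE gz).
  have xy' : x \notin comp src tgt A col be ga y by rewrite inE.
  have yy : y \in comp src tgt A col be ga y by rewrite inE connect0.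
  have := la (kswap_proper be ga y pr) ga.
  rewrite (kswap_pres_out _ xy') (kswap_pres_in _ yy) /swapc.
  by rewrite (negbTE gb) eqxx (negbTE gx) (negbTE hbe).
have Hxy := la pr.
have disj : forall v w, (forall c, present src tgt A col v c || present src tgt A col w c) ->
    miss A col v :&: miss A col w = finset.set0.
  by move=> v w h; apply/setP => c; rewrite !inE -negb_or h.
have tot : #|miss A col x :|: miss A col y :|: miss A col z| <= K.
  by apply: (leq_trans (max_card _)); rewrite card_ord.
have h3 : (miss A col x :|: miss A col y) :&: miss A col z = finset.set0.
  by rewrite finset.setIUl (disj _ _ Hxz) (disj _ _ Hyz) finset.setU0.
move: tot; rewrite cardsU h3 cards0 subn0 cardsU (disj _ _ Hxy) cards0 subn0 => tot.
have := miss_card A col x; have := miss_card A col y; have := miss_card A col z.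
have := edges_lt xe0; have := edges_lt ye0; have := edges_le z.
lia.
Qed.

End Ext.

Lemma shannon_ord (V E : finType) (src tgt : E -> V) (U : {set E}) (D K : nat) :
  0 < K -> (forall e, e \in U -> src e != tgt e) ->
  (forall v, #|[set e in U | incident src tgt v e]| <= D) -> 3 * D <= 2 * K ->
  exists col : E -> 'I_K, proper src tgt U col.
Proof.
move=> K0 loopU degU DK.
suff : forall n (A : {set E}), #|A| = n -> A \subset U ->
    exists col : E -> 'I_K, proper src tgt A col.
  by move=> /(_ _ U erefl (subxx U)).
elim => [|n IH] A cA AU.
  exists (fun _ => Ordinal K0) => e e'; move: cA => /cards0_eq ->; by rewrite inE.
have : 0 < #|A| by rewrite cA.
case/card_gt0P => e0 e0A.
have cA' : #|A :\ e0| = n by move: cA; rewrite (cardsD1 e0 A) e0A add1n => [[]].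
have A'U : A :\ e0 \subset U by apply: fintype.subset_trans AU; apply: subsetDl.
have [col pr] := IH _ cA' A'U.
rewrite -(finset.setD1K e0A).
apply: NNPP => noext.
apply: (main_contra loopU degU DK A'U (fintype.subsetP AU _ e0A) _ noext pr).
by rewrite !inE eqxx.
Qed.

End KempeM.

Lemma card_pairs (E : finType) (n : nat) (k : E -> nat) (P : pred E) :
  (forall e, k e <= n)%N ->
  #|[set p : E * 'I_n | (p.2 < k p.1)%N && P p.1]| = (\sum_(e | P e) k e)%N.
Proof.
move=> kn.
rewrite -sum1_card.
rewrite (eq_bigl (fun p : E * 'I_n => P p.1 && (p.2 < k p.1)%N)); last first.
  by move=> p; rewrite inE andbC.
rewrite -(pair_big_dep P (fun e (i : 'I_n) => (i < k e)%N) (fun _ _ => 1%N)) /=.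
apply: eq_bigr => e _.
rewrite (big_ord_narrow (kn e)) sum1_card card_ord //.
Qed.

Lemma shannon (V E : finType) (src tgt : E -> V) (U : {set E}) (D K : nat) :
  (forall e, e \in U -> src e != tgt e) ->
  (forall v, #|[set e in U | incident src tgt v e]| <= D)%N ->
  (3 * D <= 2 * K)%N ->
  exists col : E -> nat, (forall e, e \in U -> col e < K)%N /\
    (forall e e', e \in U -> e' \in U -> e != e' ->
       (exists v, incident src tgt v e && incident src tgt v e') -> col e != col e').
Proof.
move=> loopU degU DK.
case: (posnP K) => [K0|Kpos].
  have Dz : D = 0%N by lia.
  have nU : forall e, e \in U -> False.
    move=> e eU; have := degU (src e).
    have : (0 < #|[set f in U | incident src tgt (src e) f]|)%N.
      by apply/card_gt0P; exists e; rewrite inE eU /incident eqxx.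
    lia.
  exists (fun _ => 0%N); split => [e eU|e e' eU]; exfalso; exact: nU eU.
have [col pr] := KempeM.shannon_ord Kpos loopU degU DK.
exists (fun e => nat_of_ord (col e)); split => [e _|e e' eU eU' ne [v hv]]; first exact: ltn_ord.
have sh : KempeM.share src tgt e e' by apply/existsP; exists v.
by have := pr e e' eU eU' ne sh.
Qed.

Local Open Scope ring_scope.
Local Open Scope classical_set_scope.

Lemma mem_bigU (T : Type) n (P : pred 'I_n) (F : 'I_n -> set T) t :
  (\big[setU/set0]_(i < n | P i) F i) t <-> exists i, P i /\ F i t.
Proof.
split.
- elim/big_rec: _ => [//|i S Pi IH [Fit|/IH//]]; by exists i.
- move=> [i [Pi Fit]]; rewrite (bigD1 i) //=; by left.
Qed.

Lemma deg_gt0 (V E : finType) (src tgt : E -> V) v e :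
  incident src tgt v e -> (0 < deg src tgt v)%N.
Proof. by move=> h; apply/card_gt0P; exists e; rewrite inE. Qed.

Lemma deg_le (V E : finType) (src tgt : E -> V) v : (deg src tgt v <= #|E|)%N.
Proof. exact: max_card. Qed.

Unset Implicit Arguments.

Theorem theorem6p2 (R : realType) (V E : finType) (src tgt : E -> V)
    (f : E -> rat) :
  loopless src tgt ->
  demand f ->
  (forall e : E,
     f e <= 2 / (3 * (maxn (deg src tgt (src e)) (deg src tgt (tgt e)))%:R)) ->
  exists phi : E -> set R, f_coloring src tgt f phi.
Proof.
move=> loopl dem hf.
pose P := factorial #|E|.
pose m e := maxn (deg src tgt (src e)) (deg src tgt (tgt e)).
have m_gt0 e : (0 < m e)%N.
  by rewrite leq_max (deg_gt0 (e := e)) // /incident eqxx.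
have m_dvd e : (m e %| P)%N.
  by apply: dvdn_fact; rewrite m_gt0 /= geq_max !deg_le.
have P_gt0 : (0 < P)%N by exact: fact_gt0.
clearbody P.
pose k e := ((2 * P) %/ m e)%N.
have k_le e : (k e <= 2 * P)%N by apply: leq_div.
have kmE e : (k e * m e = 2 * P)%N.
  by rewrite /k divnK // dvdn_mull.
pose n := (2 * P).+1.
pose src' (p : E * 'I_n) := src p.1.
pose tgt' (p : E * 'I_n) := tgt p.1.
pose U := [set p : E * 'I_n | (p.2 < k p.1)%N]%SET.
have [col [colK colP]] : exists col : E * 'I_n -> nat,
   (forall e, e \in U -> col e < 3 * P)%N /\
    (forall e e', e \in U -> e' \in U -> e != e' ->
       (exists v, incident src' tgt' v e && incident src' tgt' v e') -> col e != col e').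
  apply: (shannon (D := (2 * P)%N)); first by move=> e _; exact: loopl.
    move=> v.
    have -> : [set e in U | incident src' tgt' v e]%SET =
       [set p : E * 'I_n | (p.2 < k p.1)%N && incident src tgt v p.1]%SET.
      by apply/setP => p; rewrite !inE.
    rewrite (@card_pairs E n k (incident src tgt v)); last by move=> e; exact: leqW.
    apply: (@leq_trans (\sum_(e | incident src tgt v e) ((2 * P) %/ deg src tgt v))%N).
      apply: leq_sum => e he; apply: leq_div2l; first exact: deg_gt0 he.
      by rewrite /m leq_max; case/orP: he => /eqP ->; rewrite leqnn ?orbT.
    rewrite sum_nat_const.
    have -> : #|[pred e | incident src tgt v e]| = deg src tgt v.
      by apply: eq_card => e; rewrite inE.
    by rewrite mulnC leq_divM.
  by rewrite mulnCA mulnA.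
have N0 : (0 < 3 * P)%N by rewrite muln_gt0 /= P_gt0.
pose N : R := (3 * P)%:R.
have Ngt0 : 0 < N by rewrite ltr0n.
have Nigt0 : 0 < N^-1 by rewrite invr_gt0.
pose I (c : nat) : set R := [set` Interval (BLeft (c%:R / N)) (BLeft (c.+1%:R / N))].
have Iuniq c c' t : I c t -> I c' t -> c = c'.
  rewrite /I /= !in_itv /= => /andP[h1 h2] /andP[h3 h4].
  have a : (c < c'.+1)%N.
    by have := le_lt_trans h1 h4; rewrite (ltr_pM2r Nigt0) ltr_nat.
  have b : (c' < c.+1)%N.
    by have := le_lt_trans h3 h2; rewrite (ltr_pM2r Nigt0) ltr_nat.
  by apply/eqP; rewrite eqn_leq; apply/andP; split; rewrite -ltnS.
have Isub c t : (c < 3 * P)%N -> I c t -> `[0%R, 1%R]%classic t.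
  move=> hc; rewrite /I /= !in_itv /= => /andP[h1 h2]; apply/andP; split.
    by apply: le_trans h1; rewrite divr_ge0 // ler0n.
  apply: ltW; apply: (lt_le_trans h2); rewrite ler_pdivrMr // mul1r ler_nat //.
have Imeas c : lebesgue_measure (I c) = (N^-1)%:E.
  rewrite lebesgue_measure_itv /= ifT; last first.
    by rewrite lte_fin (ltr_pM2r Nigt0) ltr_nat.
  rewrite -EFinB; congr (_%:E).
  by rewrite -mulrBl -natrB // subSnn mul1r.
pose phi e := \big[setU/set0]_(i < n | (i < k e)%N) I (col (e, i)).
exists phi; split.
- by move=> e; apply: bigsetU_measurable => i _; exact: measurable_itv.
- move=> e t /mem_bigU [i [hi hI]]; apply: (Isub _ _ _ hI).
  by apply: colK; rewrite inE.
- move=> e e' /andP [nee /existsP [v hv]].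
  apply/seteqP; split => // t [/mem_bigU [i [hi hI]] /mem_bigU [j [hj hJ]]].
  have := Iuniq _ _ _ hI hJ => /eqP; apply/negP.
  apply: colP; rewrite ?inE //.
    by apply: contra nee => /eqP [->].
  by exists v.
- move=> e.
  rewrite measure_bigsetU_ord_cond; last first.
    move=> i j /= hi hj [t [hI hJ]]; apply/eqP/negPn/negP => nij.
    have := Iuniq _ _ _ hI hJ => /eqP; apply/negP.
    apply: colP; rewrite ?inE //.
      by apply: contra nij => /eqP [->].
    by exists (src e); rewrite /incident eqxx.
    by move=> i _; exact: measurable_itv.
  rewrite (eq_bigr (fun _ => (N^-1)%:E)); last by move=> i _; exact: Imeas.
  rewrite sumEFin (big_ord_narrow (leqW (k_le e))) sumr_const card_ord lee_fin.
  have hk : (k e)%:R = (2 * P)%:R / (m e)%:R :> R.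
    by rewrite -(kmE e) natrM mulfK // pnatr_eq0 -lt0n m_gt0.
  apply: (le_trans (y := ratr (2 / (3 * (m e)%:R)))).
    by rewrite ler_rat; exact: hf e.
  rewrite fmorph_div rmorphM /= !ratr_nat.
  rewrite -[N^-1 *+ _]mulr_natr hk /N.
  have m0 : (m e)%:R != 0 :> R by rewrite pnatr_eq0 -lt0n m_gt0.
  have P0 : P%:R != 0 :> R by rewrite pnatr_eq0 -lt0n P_gt0.
  rewrite le_eqVlt; apply/orP; left; apply/eqP; rewrite !natrM.
  by field; rewrite ?m0 ?P0 ?pnatr_eq0.
Qed.
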